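(* For any matroid $L$ on a finite set $U$ and any $S\subseteq U$, the identity map on $U$ is a rank-preserving weak map $L|S\mathbin{\Box} L/S\rightarrow L$; that is, every independent set of $L$ is independent in $L|S\mathbin{\Box} L/S$, and the two matroids have the same rank.
   Context: For a matroid $M$ on $S$ write $\rho_M$ for rank, $\rho(M)=\rho_M(S)$, $\nu_M(A)=|A|-\rho_M(A)$, $\lambda_M(A)=\rho(M)-\rho_M(A)$. For matroids $M$ on $S$ and $N$ on $T$ with $S\cap T=\emptyset$, the free product $M\mathbin{\Box} N$ is the matroid on $S\cup T$ whose independent sets are those $A$ with $A\cap S$ independent in $M$ and $\lambda_M(A\cap S)\geq\nu_N(A\cap T)$. $L|S$ is the restriction to $S$ and $L/S$ the contraction of $S$ (on $U\setminus S$). The identity map is a weak map $L_1\to L_2$ between matroids on the same set if every independent set of $L_2$ is independent in $L_1$. *)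

(* Defs.v *)
From mathcomp Require Import all_boot.
Set Implicit Arguments. Unset Strict Implicit. Unset Printing Implicit Defensive.

Definition is_matroid (T : finType) (E : {set T}) (I : pred {set T}) : Prop :=
  [/\ forall A : {set T}, I A -> A \subset E,
      I set0,
      forall A B : {set T}, I B -> A \subset B -> I A &
      forall A B : {set T}, I A -> I B -> #|A| < #|B| ->
        exists2 x, x \in B :\: A & I (x |: A)].

Definition mrank (T : finType) (I : pred {set T}) (A : {set T}) : nat :=
  \max_(B : {set T} | (B \subset A) && I B) #|B|.

Definition restr_indep (T : finType) (I : pred {set T}) (S : {set T})
  : pred {set T} := fun A => (A \subset S) && I A.

Definition contr_indep (T : finType) (U : {set T}) (I : pred {set T})
  (S : {set T}) : pred {set T} :=
  fun A => (A \subset U :\: S) && (mrank I (A :|: S) == #|A| + mrank I S).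

(* free product M [] N, M on E1 with independent sets I1, N on E2 with I2:
   A independent iff A n E1 indep in M and lambda_M(A n E1) >= nu_N(A n E2),
   where lambda_M(X) = rho(M) - rho_M(X), nu_N(Y) = |Y| - rho_N(Y). *)
Definition freeprod_indep (T : finType) (E1 : {set T}) (I1 : pred {set T})
  (E2 : {set T}) (I2 : pred {set T}) : pred {set T} :=
  fun A => [&& A \subset E1 :|: E2, I1 (A :&: E1) &
     mrank I1 E1 - mrank I1 (A :&: E1) >= #|A :&: E2| - mrank I2 (A :&: E2)].

(* Main.v *)
Require Import Defs.
From mathcomp Require Import all_boot.
From mathcomp Require Import zify.

Section Aux.
Variable T : finType.
Implicit Types (A B X Y S : {set T}) (I : pred {set T}).

Lemma mrank_ge I A B : B \subset A -> I B -> #|B| <= mrank I A.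
Proof.
move=> sBA iB; rewrite /mrank.
by apply: (leq_bigmax_cond (F := fun B : {set T} => #|B|)); rewrite sBA iB.
Qed.

Lemma mrank_le I A n : (forall B, B \subset A -> I B -> #|B| <= n) -> mrank I A <= n.
Proof. by move=> H; apply/bigmax_leqP => B /andP[]; apply: H. Qed.

Lemma mrank_ex I A : I set0 -> exists B, [/\ B \subset A, I B & #|B| = mrank I A].
Proof.
move=> i0.
have : 0 < #|[pred B : {set T} | (B \subset A) && I B]|.
  by apply/card_gt0P; exists set0; rewrite inE sub0set i0.
move/(eq_bigmax_cond (fun B : {set T} => #|B|)) => [B].
rewrite inE => /andP[sBA iB] e; exists B; split => //.
Qed.

Lemma indep_rank I X : I X -> mrank I X = #|X|.
Proof.
move=> iX; apply/eqP; rewrite eqn_leq mrank_ge // andbT.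
by apply: mrank_le => B sBX _; apply: subset_leq_card.
Qed.

Lemma mrank_mono I X Y : X \subset Y -> mrank I X <= mrank I Y.
Proof.
move=> sXY; apply: mrank_le => B sBX iB; apply: mrank_ge => //.
exact: subset_trans sBX sXY.
Qed.

Lemma restrE I S X : X \subset S -> mrank (restr_indep I S) X = mrank I X.
Proof.
move=> sXS; rewrite /mrank; apply: eq_bigl => B; rewrite /restr_indep.
case sBX: (B \subset X) => //=.
by rewrite (subset_trans sBX sXS).
Qed.

Lemma split_bound (U : {set T}) I S B : is_matroid U I ->
  mrank I (B :|: S) <= #|B| + mrank I S.
Proof.
move=> [_ _ down _]; apply: mrank_le => X sX iX.
rewrite -(cardsID S X).
have h1 : #|X :&: S| <= mrank I S.
  by apply: mrank_ge; [apply: subsetIr | apply: down iX (subsetIl _ _)].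
have h2 : #|X :\: S| <= #|B|.
  apply: subset_leq_card; apply/subsetP => x; rewrite !inE => /andP[nxS xX].
  by move/subsetP: sX => /(_ x xX); rewrite inE (negbTE nxS) orbF.
lia.
Qed.

Lemma extend (U : {set T}) I : is_matroid U I -> forall X Y, I X -> I Y ->
  exists J, [/\ I J, X \subset J, J \subset X :|: Y & #|Y| <= #|J|].
Proof.
move=> [_ _ _ aug] X Y iX iY.
suff H : forall k X, I X -> #|Y| - #|X| <= k ->
  exists J, [/\ I J, X \subset J, J \subset X :|: Y & #|Y| <= #|J|].
  exact: (H _ X iX (leqnn _)).
elim=> [|k IH] {}X {}iX hk.
  by exists X; split => //; [apply: subsetUl | lia].
case: (leqP #|Y| #|X|) => h.
  by exists X; split => //; apply: subsetUl.
have [x xYX ixX] := aug X Y iX iY h.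
move: xYX; rewrite inE => /andP[xnX xY].
have [J [iJ sJ sJ2 cJ]] := IH (x |: X) ixX (ltac:(rewrite cardsU1 xnX; lia)).
exists J; split => //.
  by apply: subset_trans sJ; apply: subsetUr.
apply: subset_trans sJ2 _; apply/subsetP => y; rewrite !inE.
by case/orP => [/orP[/eqP->|->]|->]; rewrite ?xY ?orbT.
Qed.

End Aux.
Arguments mrank_ex {T I} A _.
Arguments extend {T U I} _ {X Y} _ _.
Arguments split_bound {T U I S B} _.

Theorem proposition4p2 (T : finType) (U : {set T}) (I : pred {set T})
  (S : {set T}) :
  is_matroid U I -> S \subset U ->
  (forall A : {set T}, I A ->
     freeprod_indep S (restr_indep I S) (U :\: S) (contr_indep U I S) A) /\
  mrank (freeprod_indep S (restr_indep I S) (U :\: S) (contr_indep U I S))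
        (S :|: (U :\: S)) = mrank I U.
Proof.
move=> mat sSU; have mat' := mat; case: mat' => [sub i0 down aug].
have eU : S :|: (U :\: S) = U.
  apply/setP => x; rewrite !inE; case xS: (x \in S) => //=.
  by move/subsetP: sSU => /(_ x xS) ->.
have cardA : forall A : {set T}, A \subset U -> #|A| = #|A :&: S| + #|A :&: (U :\: S)|.
  move=> A sAU; rewrite setIDA (setIidPl sAU); by rewrite cardsID.
have part1 : forall A : {set T}, I A ->
     freeprod_indep S (restr_indep I S) (U :\: S) (contr_indep U I S) A.
  move=> A iA; have sAU := sub A iA.
  have iAS : I (A :&: S) by apply: down iA (subsetIl _ _).
  have rAS : restr_indep I S (A :&: S) by rewrite /restr_indep subsetIr iAS.
  rewrite /freeprod_indep eU sAU rAS /=.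
  rewrite restrE // restrE ?subsetIr // (@indep_rank _ _ _ iAS).
  have [Y [sYS iY cY]] := mrank_ex S i0.
  have [BS [iBS sABS sBS cBS]] := extend mat iAS iY.
  have sBSS : BS \subset S.
    apply: subset_trans sBS _; apply/subUsetP; split => //; exact: subsetIr.
  have [J [iJ sBSJ sJ cJ]] := extend mat iBS iA.
  set A' := A :&: (U :\: S).
  set B := J :\: S.
  have sBA' : B \subset A'.
    apply/subsetP => x; rewrite !inE => /andP[nxS xJ].
    move/subsetP: sJ => /(_ x xJ); rewrite inE => /orP[xBS|xA].
      by move/subsetP: sBSS => /(_ x xBS); rewrite (negbTE nxS).
    by rewrite xA nxS; move/subsetP: sAU => /(_ x xA) ->.
  have cJS : #|J :&: S| <= mrank I S.
    by apply: mrank_ge; [apply: subsetIr | apply: down iJ (subsetIl _ _)].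
  have cJS2 : #|BS| <= #|J :&: S|.
    by apply: subset_leq_card; apply/subsetIP.
  have eJ := cardsID S J.
  have cB : contr_indep U I S B.
    rewrite /contr_indep; apply/andP; split.
      by apply: subset_trans sBA' (subsetIr _ _).
    rewrite eqn_leq (split_bound mat) /=.
    have : #|J| <= mrank I (B :|: S).
      apply: mrank_ge => //; apply/subsetP => x xJ.
      by rewrite /B in_setU in_setD xJ andbT; case: (x \in S).
    rewrite -/B in eJ => h.
    move: (#|J|) (#|B|) (#|BS|) (#|Y|) (#|J :&: S|) (mrank I S) (mrank I (B :|: S)) h eJ cBS cY cJS2 cJS.
    clear; lia.
  have hB : #|B| <= mrank (contr_indep U I S) A' by apply: mrank_ge.
  have := cardA A sAU; rewrite -/A' -/B in eJ * => hA.
  move: (#|A|) (#|A'|) (#|A :&: S|) (#|B|) (#|J|) (#|J :&: S|) (mrank I S) (mrank (contr_indep U I S) A') hA eJ cJ cJS hB.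
  clear; lia.
split => //.
apply/eqP; rewrite eqn_leq; apply/andP; split.
  apply: mrank_le => A; rewrite eU => sAU /and3P[_ iAS' hineq].
  move: (iAS'); rewrite /restr_indep => /andP[_ iAS].
  rewrite restrE // restrE ?subsetIr // (@indep_rank _ _ _ iAS) in hineq.
  set A' := A :&: (U :\: S) in hineq.
  have c0 : contr_indep U I S set0.
    by rewrite /contr_indep sub0set set0U cards0 add0n eqxx.
  have [B [sBA' /andP[sB /eqP eB] cB]] := mrank_ex A' c0.
  have hS : #|A :&: S| <= mrank I S by apply: mrank_ge => //; apply: subsetIr.
  have hU : mrank I (B :|: S) <= mrank I U.
    apply: mrank_mono; apply/subUsetP; split => //.
    by apply: subset_trans sB (subsetDl _ _).
  have := cardA A sAU; rewrite -/A' => hA.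
  move: (#|A|) (#|A'|) (#|A :&: S|) (#|B|) (mrank I S) (mrank I (B :|: S)) (mrank I U) (mrank (contr_indep U I S) A') hA hineq eB cB hS hU.
  clear; lia.
have [Y [sYU iY cY]] := mrank_ex U i0.
by rewrite -cY; apply: mrank_ge; [rewrite eU | apply: part1].
Qed.
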